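(* Let $(X,\mathcal A,m)$ be a probability space and $\mathcal B$ a Banach space continuously embedded in $L^1(X,m)$ and containing the constants. Let $L_\epsilon$, $\epsilon\in V$ ($V$ a neighbourhood of $0$), be Markov operators on $\mathcal B$ such that for each $\epsilon$, $1$ is a simple eigenvalue of $L_\epsilon$ with eigenfunction $h_\epsilon$ normalized by $\int h_\epsilon\,dm=1$. Suppose: (1) $\epsilon\mapsto L_\epsilon h_0\in\mathcal B$ is differentiable at $\epsilon=0$; (2) $\epsilon\mapsto L_\epsilon\phi\in\mathcal B$ is continuous at $\epsilon=0$ for every $\phi\in\mathcal B$; (3) there exist $\theta\in(0,1)$ and $C>0$, independent of $\epsilon$, such that $\|L_\epsilon^n\phi\|_{\mathcal B}\le C\theta^n\|\phi\|_{\mathcal B}$ for all $\phi\in\mathcal B_0$ and $n\ge1$. Then $h_\epsilon$ is differentiable at $\epsilon=0$ as an element of $\mathcal B$, and $\partial_\epsilon h_\epsilon|_{\epsilon=0}=(I-L_0)^{-1}\partial_\epsilon L_\epsilon h_0|_{\epsilon=0}$.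
   Context: $\mathcal B_0=\{\phi\in\mathcal B:\int\phi\,dm=0\}$; $(I-L_0)^{-1}$ is the inverse of $I-L_0$ on $\mathcal B_0$. A Markov operator is a positive linear operator preserving the integral with respect to $m$. *)

(* Defs.v *)
From HB Require Import structures.
From mathcomp Require Import all_boot all_order all_algebra.
From mathcomp Require Import all_classical all_reals all_analysis.
Set Implicit Arguments. Unset Strict Implicit. Unset Printing Implicit Defensive.
Import Order.TTheory GRing.Theory Num.Theory.
Import numFieldNormedType.Exports.
Local Open Scope classical_set_scope.
Local Open Scope ring_scope.

(* [emb] : B -> (X -> R) realises a Banach space B continuously embedded in
   L^1(X,m) and containing the constants. *)
Definition L1_embedding (d : measure_display) (X : measurableType d)
  (R : realType) (m : probability X R) (B : completeNormedModType R)
  (emb : B -> X -> R) : Prop :=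
  (forall (a : R) (u v : B) (x : X), emb (a *: u + v) x = a * emb u x + emb v x)
  /\ (forall u : B, {ae m, forall x, emb u x = 0} -> u = 0)
  /\ (forall u : B, m.-integrable setT (fun x => (emb u x)%:E))
  /\ (exists K : R, forall u : B,
        (\int[m]_x (`|emb u x|)%:E <= (K * `|u|)%:E)%E)
  /\ (exists one : B, forall x, emb one x = 1).

Definition Bint (d : measure_display) (X : measurableType d)
  (R : realType) (m : probability X R) (B : completeNormedModType R)
  (emb : B -> X -> R) (u : B) : \bar R :=
  (\int[m]_x (emb u x)%:E)%E.

Definition markov_op (d : measure_display) (X : measurableType d)
  (R : realType) (m : probability X R) (B : completeNormedModType R)
  (emb : B -> X -> R) (L : B -> B) : Prop :=
  (forall (a : R) (u v : B), L (a *: u + v) = a *: L u + L v)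
  /\ continuous L
  /\ (forall u : B, {ae m, forall x, 0 <= emb u x} ->
                    {ae m, forall x, 0 <= emb (L u) x})
  /\ (forall u : B, Bint m emb (L u) = Bint m emb u).

(* Main.v *)
Require Import Defs.
From HB Require Import structures.
From mathcomp Require Import all_boot all_order all_algebra.
From mathcomp Require Import all_classical all_reals all_analysis.
From mathcomp Require Import lra ring.
Set Implicit Arguments. Unset Strict Implicit. Unset Printing Implicit Defensive.
Import Order.TTheory GRing.Theory Num.Theory.
Import numFieldNormedType.Exports.
Local Open Scope classical_set_scope.
Local Open Scope ring_scope.

Section Bint.
Context (d : measure_display) (X : measurableType d)
  (R : realType) (m : probability X R) (B : completeNormedModType R)
  (emb : B -> X -> R).
Hypothesis hemb : L1_embedding m emb.

Definition bint u := fine (Bint m emb u).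

Lemma BintE u : Bint m emb u = (bint u)%:E.
Proof.
case: hemb => _ [_ [hi _]].
by rewrite /bint fineK //; exact: integrable_fin_num (hi u).
Qed.

Lemma bintD a u v : bint (a *: u + v) = a * bint u + bint v.
Proof.
case: hemb => hl [_ [hi _]].
suff : Bint m emb (a *: u + v) = (a * bint u + bint v)%:E.
  by rewrite BintE => -[].
rewrite /Bint.
under eq_integral do rewrite hl EFinD EFinM.
rewrite integralD //; last exact: (integrableZl measurableT a (hi u)).
rewrite integralZl //.
by rewrite -!/(Bint m emb _) !BintE.
Qed.

Lemma bint_bound : exists K : R, 0 < K /\ forall u, `|bint u| <= K * `|u|.
Proof.
case: hemb => hl [_ [hi [[K hK] _]]].
exists (Num.max K 1); split; first by rewrite lt_max ltr01 orbT.
move=> u.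
have : (`|Bint m emb u| <= (K * `|u|)%:E)%E.
  apply: le_trans (hK u).
  apply: le_abse_integral => //.
  exact: measurable_int (hi u).
rewrite BintE /= lee_fin => h1.
apply: le_trans h1 _; apply: ler_wpM2r => //.
by rewrite le_max lexx.
Qed.
Lemma bint0 : bint 0 = 0.
Proof. have := bintD 1 0 0; rewrite scaler0 addr0 mul1r => /eqP. by rewrite -subr_eq subrr eq_sym => /eqP. Qed.
Lemma bintZ a u : bint (a *: u) = a * bint u.
Proof. by have := bintD a u 0; rewrite !addr0 bint0 addr0. Qed.
Lemma bintB u v : bint (u - v) = bint u - bint v.
Proof. by rewrite -scaleN1r addrC bintD mulN1r addrC. Qed.
End Bint.

Section Lin.
Context (R : realType) (B : normedModType R) (L : B -> B).
Hypothesis hL : forall (a : R) u v, L (a *: u + v) = a *: L u + L v.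

Lemma L0 : L 0 = 0.
Proof.
have := hL 1 0 0; rewrite scaler0 add0r scale1r => /eqP.
by rewrite -subr_eq subrr eq_sym => /eqP.
Qed.

Lemma LD u v : L (u + v) = L u + L v.
Proof. by have := hL 1 u v; rewrite !scale1r. Qed.

Lemma LZ a u : L (a *: u) = a *: L u.
Proof. by have := hL a u 0; rewrite !addr0 L0 addr0. Qed.

Lemma LN u : L (- u) = - L u.
Proof. by rewrite -scaleN1r LZ scaleN1r. Qed.

Lemma LB u v : L (u - v) = L u - L v.
Proof. by rewrite LD LN. Qed.

Lemma iterB n u v : iter n L (u - v) = iter n L u - iter n L v.
Proof. by elim: n => //= n ->; rewrite LB. Qed.

End Lin.

Lemma unif_bound (R : realType) (B : normedModType R) (P : B -> Prop)
  (theta C : R) :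
  0 < theta < 1 -> 0 < C ->
  exists M : R, 0 < M /\ forall L : B -> B,
    (forall (a : R) u v, L (a *: u + v) = a *: L u + L v) ->
    (forall u, P u -> P (L u)) ->
    (forall u v, P u -> P v -> P (u - v)) ->
    (forall u, P u -> forall n : nat, (1 <= n)%N ->
        `|iter n L u| <= C * theta ^+ n * `|u|) ->
    forall w, P w -> `|w| <= M * `|w - L w|.
Proof.
move=> /andP[t0 t1] C0.
have : (GRing.exp theta : R ^nat) @ \oo --> 0.
  by apply: cvg_expr; rewrite ger0_norm ?ltW.
move=> /cvgr0_norm_lt /(_ (2 * C)^-1).
rewrite invr_gt0 mulr_gt0 // => /(_ isT) [N _ hN].
pose C' := Num.max 1 C.
have C'1 : 1 <= C' by rewrite le_max lexx.
have C'C : C <= C' by rewrite le_max lexx orbT.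
have hNN : `|theta ^+ N.+1| < (2 * C)^-1 by apply: hN => /=; rewrite leqW.
exists (2 * N.+1%:R * C'); split.
  by rewrite !mulr_gt0 // (lt_le_trans ltr01).
move=> L hL PL PB h3 w Pw.
set f := w - L w.
have Pf : P f by apply: PB => //; exact: PL.
have hk : forall k, `|iter k L f| <= C' * `|f|.
  case=> [|k] /=; first by rewrite ler_peMl.
  have := h3 f Pf k.+1 isT => /= /le_trans; apply.
  apply: ler_wpM2r => //.
  rewrite -[C']mulr1; apply: ler_pM => //; first by rewrite ltW.
    by rewrite exprn_ge0 // ltW.
  by rewrite exprn_ile1 // ltW.
have hind : forall n, `|w| <= `|iter n L w| + n%:R * (C' * `|f|).
  elim=> [|n IH]; first by rewrite /= mul0r addr0.
  apply: le_trans IH _.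
  have e : iter n L w = iter n L f + iter n.+1 L w.
    by rewrite /f iterB // -iterSr subrK.
  rewrite [in `|iter n L w|]e.
  rewrite -[_.+1%:R]natr1 mulrDl mul1r addrA [X in _ <= X]addrAC lerD2r.
  apply: le_trans (ler_normD _ _) _.
  by rewrite addrC lerD2r.
have := hind N.+1.
have hw : `|iter N.+1 L w| <= 2^-1 * `|w|.
  apply: le_trans (h3 w Pw N.+1 isT) _.
  apply: ler_wpM2r => //.
  rewrite -[2^-1](mulVKf (lt0r_neq0 C0)); apply: ler_wpM2l; first exact: ltW.
  rewrite -invfM [C * 2]mulrC; apply: ltW; move: hNN; rewrite ger0_norm //; exact: exprn_ge0 (ltW t0).
move=> h.
have : `|w| <= 2^-1 * `|w| + N.+1%:R * (C' * `|f|).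
  by apply: le_trans h _; rewrite lerD2r.
rewrite -lerBlDl => h2.
have e : `|w| - 2^-1 * `|w| = 2^-1 * `|w|.
  lra.
rewrite e in h2.
rewrite -!mulrA -ler_pdivrMl // ?mulrA //.
Qed.

Lemma lin_cont (R : realType) (B : normedModType R) (phi : B -> R) (K : R) :
  0 < K -> (forall (a : R) u v, phi (a *: u + v) = a * phi u + phi v) ->
  (forall u, `|phi u| <= K * `|u|) -> continuous phi.
Proof.
move=> K0 hl hb x; apply/cvgrPdist_lt => e e0.
near=> y.
have -> : phi x - phi y = phi (x - y).
  by rewrite [x - y]addrC -[- y]scaleN1r hl mulN1r addrC.
apply: le_lt_trans (hb _) _.
rewrite -ltr_pdivlMl // mulrC.
near: y.
exact: (cvgr_dist_lt (fun y => y) x (@cvg_id _ (nbhs x)) _ (divr_gt0 e0 K0)).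
Unshelve. all: by end_near.
Qed.

Lemma solve_exists (R : realType) (B : completeNormedModType R) (P : B -> Prop)
  (theta C : R) (L : B -> B) (g : B) :
  0 < theta < 1 -> 0 < C ->
  (forall (a : R) u v, L (a *: u + v) = a *: L u + L v) ->
  continuous L ->
  closed P -> P 0 -> (forall u v, P u -> P v -> P (u + v)) ->
  (forall u, P u -> P (L u)) ->
  (forall u, P u -> forall n : nat, (1 <= n)%N ->
        `|iter n L u| <= C * theta ^+ n * `|u|) ->
  P g ->
  exists v, P v /\ v - L v = g.
Proof.
move=> /andP[t0 t1] C0 hL hc Pc P0 PD PL h3 Pg.
pose u k := iter k L g.
pose C' := Num.max 1 C.
have C'1 : 1 <= C' by rewrite le_max lexx.
have C'C : C <= C' by rewrite le_max lexx orbT.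
have hk : forall k, `|u k| <= geometric (C' * `|g|) theta k.
  rewrite /geometric /=.
  case=> [|k] /=; first by rewrite expr0 mulr1 ler_peMl.
  have := h3 g Pg k.+1 isT => /= /le_trans; apply.
  rewrite mulrAC; apply: ler_wpM2r; first exact: exprn_ge0 (ltW t0).
  exact: ler_wpM2r.
have hn : cvgn [normed series u].
  apply: (@series_le_cvg _ _ (geometric (C' * `|g|) theta)).
  - by move=> n /=.
  - move=> n; apply: geometric_ge0; last exact: ltW.
    by rewrite mulr_ge0 // (le_trans ler01).
  - exact: hk.
  - by apply: is_cvg_geometric_series; rewrite ger0_norm ?ltW.
have hs := normed_cvg hn.
set v := limn (series u).
have hsv : series u @ \oo --> v by exact: hs.
have rec : forall n, series u n.+1 = g + L (series u n).
  elim=> [|n IH].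
    by rewrite seriesSr /series /= big_geq // add0r (L0 hL) addr0.
  by rewrite [in RHS]seriesSr [LHS]seriesSr IH -addrA (LD hL).
have e1 : (fun n => series u n.+1) @ \oo --> v.
  by rewrite (cvg_shiftS (series u)).
have e2 : (fun n => g + L (series u n)) @ \oo --> g + L v.
  apply: cvgD; first exact: cvg_cst.
  exact: continuous_cvg (hc v) hsv.
have ev : v = g + L v.
  have e3 : (fun n => series u n.+1) @ \oo --> g + L v.
    by rewrite (_ : (fun n => series u n.+1) = (fun n => g + L (series u n))) //; apply: funext.
  exact: cvg_unique e1 e3.
exists v; split; last by rewrite {1}ev addrK.
have Pu : forall k, P (u k) by elim=> //= k; exact: PL.
have hP : forall n, P (series u n).
  elim=> [|n IH]; first by rewrite /series /= big_geq.
  by rewrite seriesSr; apply: PD.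
apply: (@closed_cvg _ _ _ _ (series u) P Pc _ v hsv).
exact: nearW.
Qed.

Section Z. Variable V : zmodType.
Lemma z1 (x y a b : V) : (x - y) - (a - b) = (x - a) - (y - b).
Proof. by rewrite !opprB addrACA [RHS]addrACA [- a + _]addrC. Qed.
Lemma z2 (x y z : V) : (x - y) - (x - z) = z - y.
Proof. by rewrite opprB addrC subrKA addrC. Qed.
Lemma z3 (x y z : V) : x - z = (x - y) + (y - z).
Proof. by rewrite subrKA. Qed.
End Z.


Unset Implicit Arguments.

Theorem proposition6p2 (d : measure_display) (X : measurableType d)
  (R : realType) (m : probability X R) (B : completeNormedModType R)
  (emb : B -> X -> R) (V : set R) (L : R -> B -> B) (h : R -> B)
  (theta C : R) :
  L1_embedding m emb ->
  V \in nbhs (0 : R) ->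
  (forall e, V e -> markov_op m emb (L e)) ->
  (* 1 is a simple eigenvalue of L e with eigenfunction h e, int h e = 1 *)
  (forall e, V e -> L e (h e) = h e) ->
  (forall e, V e -> forall u : B, L e u = u -> exists c : R, u = c *: h e) ->
  (forall e, V e -> Bint m emb (h e) = 1%E) ->
  (* (1) *)
  derivable (fun e => L e (h 0)) 0 1 ->
  (* (2) *)
  (forall u : B, {for 0, continuous (fun e => L e u)}) ->
  (* (3) *)
  0 < theta < 1 -> 0 < C ->
  (forall e, V e -> forall u : B, Bint m emb u = 0%E -> forall n : nat,
     (1 <= n)%N -> `|iter n (L e) u| <= C * theta ^+ n * `|u|) ->
  (* conclusion: h differentiable at 0, derivative = (I - L_0)^{-1} of the
     derivative of e |-> L e h_0, the inverse taken on B_0 *)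
  derivable h 0 1 /\
  Bint m emb ('D_1 h 0) = 0%E /\
  'D_1 h 0 - L 0 ('D_1 h 0) = 'D_1 (fun e => L e (h 0)) 0.
Proof.
move=> hemb hV hM hfix _ hint hder hcont htheta C0 h3.
move: hV; rewrite inE => hV.
have V0 : V 0 := nbhs_singleton hV.
have hVd : \forall t \near 0^', V t := nbhs_dnbhs hV.
pose P u := bint m emb u = 0.
have PE : forall u, Bint m emb u = 0%E <-> P u.
  by move=> u; rewrite (BintE hemb) /P; split => [[]|->].
have [K [K0 hK]] := bint_bound hemb.
have bcont : continuous (bint m emb).
  apply: (lin_cont K0) => //; exact: bintD.
have Pc : closed P.
  have -> : P = bint m emb @^-1` [set x | x = 0] by [].
  apply: preimage_closed; last exact: closed_eq.
  by move=> x _; exact: bcont.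
have P0 : P 0 by exact: bint0.
have PD : forall u v, P u -> P v -> P (u + v).
  move=> u v; rewrite /P => Pu Pv.
  by have := bintD hemb 1 u v; rewrite scale1r mul1r Pu Pv addr0.
have PB : forall u v, P u -> P v -> P (u - v).
  by move=> u v; rewrite /P (bintB hemb) => -> ->; rewrite subr0.
have PZ : forall a u, P u -> P (a *: u).
  by move=> a u; rewrite /P (bintZ hemb) => ->; rewrite mulr0.
have hL : forall e, V e -> forall (a : R) u v, L e (a *: u + v) = a *: L e u + L e v.
  by move=> e /hM [].
have PL : forall e, V e -> forall u, P u -> P (L e u).
  move=> e /hM [_ [_ [_ hi]]] u; rewrite /P => Pu.
  by have := hi u; rewrite !(BintE hemb) Pu => -[].
have h3' : forall e, V e -> forall u, P u -> forall n : nat, (1 <= n)%N ->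
    `|iter n (L e) u| <= C * theta ^+ n * `|u|.
  by move=> e Ve u /PE; exact: h3.
have hcL0 : continuous (L 0) by case: (hM 0 V0) => _ [].
set g := 'D_1 (fun e => L e (h 0)) 0.
have hg : (fun t => t^-1 *: (((fun e => L e (h 0)) \o shift 0) (t *: 1) - L 0 (h 0))) @ 0^' --> g.
  exact: hder.
have bh : forall e, V e -> bint m emb (h e) = 1.
  by move=> e Ve; have := hint e Ve; rewrite (BintE hemb) => -[].
have tA : forall s : R, s%:A + 0 = s by move=> s; rewrite addr0 -[RHS]mulr1.
have hg2 : (fun t => t^-1 *: (L t (h 0) - L 0 (h 0))) @ 0^' --> g.
  rewrite (_ : (fun t => _) = (fun t => t^-1 *: (((fun e => L e (h 0)) \o shift 0) (t *: 1) - L 0 (h 0)))) //.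
  by apply: funext => s /=; rewrite tA.
have Pg : P g.
  apply: (@closed_cvg R B (0 : R)^' _ _ P Pc _ g hg).
  near=> t.
  apply: PZ; rewrite /P /= (bintB hemb).
  have Vt : V t by near: t; exact: hVd.
  have := (hM t Vt).2.2.2 (h 0); have := (hM 0 V0).2.2.2 (h 0).
  rewrite tA !(BintE hemb) => -[->] [->]; lra.
have [v [Pv hv]] := solve_exists htheta C0 (hL 0 V0) hcL0 Pc P0 PD (PL 0 V0) (h3' 0 V0) Pg.
have [M [M0 hMb]] := unif_bound P htheta C0.
have hq : (fun t => t^-1 *: ((h \o shift 0) (t *: 1) - h 0)) @ 0^' --> v.
  apply/cvgrPdist_lt => e e0.
  have e' : 0 < e / (2 * M) by rewrite divr_gt0 // mulr_gt0.
  have A1 := hg2; move/cvgrPdist_lt: A1 => /(_ _ e') A1.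
  have A2 : \forall t \near 0^', `|L 0 v - L t v| < e / (2 * M).
    exact: nbhs_dnbhs (cvgr_dist_lt _ _ (hcont v) _ e').
  near=> t.
  have Vt : V t by near: t; exact: hVd.
  have a1 : `|g - t^-1 *: (L t (h 0) - L 0 (h 0))| < e / (2 * M).
    by near: t; exact: A1.
  have a2 : `|L 0 v - L t v| < e / (2 * M) by near: t; exact: A2.
  rewrite /= tA.
  set q := t^-1 *: (h t - h 0).
  have Pr : P (q - v).
    by rewrite /P (bintB hemb) /q (bintZ hemb) (bintB hemb) !bh // Pv subrr mulr0 subrr.
  have := hMb (L t) (hL t Vt) (PL t Vt) PB (h3' t Vt) (q - v) Pr.
  have iden : (q - v) - L t (q - v) = t^-1 *: (L t (h 0) - L 0 (h 0)) - g - (L 0 v - L t v).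
    rewrite /q (LB (hL t Vt)) z1 (LZ (hL t Vt)) (LB (hL t Vt)) (hfix t Vt) -scalerBr z2 (hfix 0 V0).
    by rewrite [v - L t v](z3 _ (L 0 v)) hv opprD addrA.
  rewrite iden distrC => hb.
  apply: le_lt_trans hb _.
  rewrite distrC in a1.
  have sl : `|t^-1 *: (L t (h 0) - L 0 (h 0)) - g| + `|L 0 v - L t v| < e / M.
    have -> : e / M = e / (2 * M) + e / (2 * M).
      by field; rewrite lt0r_neq0.
    exact: ltrD.
  apply: (le_lt_trans (ler_wpM2l (ltW M0) (ler_normB _ _))).
  have eM : M * (e / M) = e by rewrite mulrC divfK // lt0r_neq0.
  by rewrite -[X in _ < X]eM ltr_pM2l.
split; first exact: cvgP hq.
have Dv : 'D_1 h 0 = v by exact: cvg_lim hq.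
rewrite Dv; split; [exact: (PE v).2 Pv | exact: hv].
Unshelve. all: by end_near.
Qed.
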